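(* Let $\epsilon>0$, $M\ge1$, and let $h^{\mathrm{Dir}}$ be the solution of the Dirichlet problem on ${\mathbb T}^{(M)}$ with the boundary condition $u$ below. Then for every $0\le n\le M$ and all distinct $z,y\in\{0,1\}^n$, $$|h^{\mathrm{Dir}}(z)-h^{\mathrm{Dir}}(y)|\ge\epsilon .$$
   Context: Binary tree: for $n\ge0$, $\{0,1\}^n$ is the set of vertices of generation $n$ (words $z=z_1\cdots z_n$; generation $0$ is the root $\emptyset$). For a vertex $z$ of generation $n$, its children are $z0,z1$, and for $0\le m\le n$, $z^{(m)}=z_1\cdots z_m$ is its ancestor in generation $m$. ${\mathbb T}^{(M)}$ is the tree of generations $0,\dots,M$. Dirichlet problem: given $M\ge1$ and $u:\{0,1\}^M\to\mathbb R$, its solution is the unique $h$ on the vertices of ${\mathbb T}^{(M)}$ with $h(\emptyset)=0$, $h(z)=u(z)$ for $z\in\{0,1\}^M$, and $h(z0)+h(z1)+h(z^{(n-1)})=3h(z)$ for all $z\in\{0,1\}^n$, $1\le n<M$. Boundary condition: $u(z)=\epsilon\sum_{\ell=2}^M2^{M-\ell}z_\ell+\tfrac12\epsilon$ if $z_1=1$, and $u(z)=-\epsilon\sum_{\ell=2}^M2^{M-\ell}z_\ell-\tfrac12\epsilon$ if $z_1=0$. *)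

(* Defs.v *)
From mathcomp Require Import all_boot all_order all_algebra.
From mathcomp Require Import reals.
Set Implicit Arguments. Unset Strict Implicit. Unset Printing Implicit Defensive.
Import Order.TTheory GRing.Theory Num.Theory.
Local Open Scope ring_scope.

(* Vertices of the binary tree are words z = z_1 ... z_n, represented as
   z : seq bool with size z = n; z_k is  nth false z (k-1).
   Children of z: rcons z false (z0), rcons z true (z1).
   Ancestor z^(m) = take m z. *)

Definition bdry (R : realType) (eps : R) (M : nat) (z : seq bool) : R :=
  let s : nat := (\sum_(2 <= l < M.+1) 2 ^ (M - l) * nth false z (l.-1))%N in
  if nth false z 0 then eps * s%:R + eps / 2 else - (eps * s%:R) - eps / 2.

Definition dirichlet_sol (R : realType) (M : nat) (u : seq bool -> R)
    (h : seq bool -> R) : Prop :=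
  [/\ h [::] = 0,
      (forall z : seq bool, size z = M -> h z = u z) &
      (forall z : seq bool, (1 <= size z)%N -> (size z < M)%N ->
         h (rcons z false) + h (rcons z true) + h (take (size z).-1 z)
         = 3 * h z)].

(* Main.v *)
Require Import Defs.
From mathcomp Require Import all_boot all_order all_algebra.
From mathcomp Require Import reals ring lra zify.
Set Implicit Arguments. Unset Strict Implicit. Unset Printing Implicit Defensive.
Import Order.TTheory GRing.Theory Num.Theory.
Local Open Scope ring_scope.

Definition G (f : bool -> bool) (acc : nat) (c : bool) : nat := (2 * acc + f c)%N.
Definition K (z : seq bool) : nat :=
  if z is b :: w then foldl (G (fun c => c == b)) b w else 0%N.

Lemma K_rcons b w a : K (rcons (b::w) a) = (2 * K (b::w) + (a == b))%N.
Proof. by rewrite /= foldl_rcons. Qed.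

Lemma foldl_G f x w : foldl (G f) x w = (2 ^ size w * x + foldl (G f) 0 w)%N.
Proof.
elim: w x => [|c w IH] x /=; first by rewrite mul1n addn0.
rewrite IH (IH (G f 0 c)) /G expnS; nia.
Qed.

Lemma foldl_comp x y w :
  (foldl (G (fun c => c == false)) x w + foldl (G (fun c => c == true)) y w + 1
   = 2 ^ size w * (x + y + 1))%N.
Proof.
elim: w x y => [|c w IH] x y /=; first by rewrite mul1n.
rewrite IH /G expnS; case: c => /=; nia.
Qed.

Lemma sum_V b w :
  (\sum_(2 <= l < (size w).+2) 2 ^ ((size w).+1 - l) * nth false (b :: w) l.-1)%N
  = foldl (G (fun c => c == true)) 0%N w.
Proof.
elim/last_ind: w => [|w c IH]; first by rewrite big_geq.
rewrite size_rcons big_nat_recr //= foldl_rcons -IH /G subnn expn0 mul1n.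
rewrite nth_rcons ltnn eqxx eqb_id; congr (_ + _)%N.
rewrite big_distrr /=; apply: eq_big_nat => l /andP [l2 lt].
case: l l2 lt => [|[|l]] // _ lt /=.
rewrite nth_rcons.
have -> : (l < size w)%N by lia.
have -> : ((size w).+2 - l.+2 = ((size w).+1 - l.+2).+1)%N by lia.
by rewrite expnS mulnA.
Qed.


Lemma K_inj z y : size z = size y -> K z = K y -> z = y.
Proof.
elim/last_ind: z y => [|z a IH] y.
  by case: y.
elim/last_ind: y => [|y a' _]; first by rewrite size_rcons.
rewrite !size_rcons => -[Hs].
case: z IH Hs => [|b z] IH Hs.
  by case: y Hs => // _; case: a; case: a'.
case: y Hs => [|b' y] // Hs.
rewrite !K_rcons => HK.
have Hd : (a == b) = (a' == b') :> nat by lia.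
have HK' : K (b :: z) = K (b' :: y) by lia.
case: (IH _ Hs HK') => Eb Ez; subst.
by move: Hd; clear HK HK' IH Hs; case: a; case: a'; case: b'.
Qed.

Lemma K_par z y a a' : size z = size y ->
  (K (rcons z a) < K (rcons y a'))%N -> (K z <= K y)%N.
Proof.
case: z => [|b z]; case: y => [|b' y] //= _.
rewrite -!cats1 -/(rcons _ _) -/(rcons _ _).
have := K_rcons b z a; have := K_rcons b' y a'.
rewrite -!cats1 /= => -> ->.
case: (a == b); case: (a' == b'); simpl; lia.
Qed.

Definition L (R : realType) (eps : R) (j : nat) (z : seq bool) : R :=
  eps * 2 ^+ j * ((K z)%:R - 2 ^+ (size z).-1 + 2^-1).

Lemma L_add (R : realType) (eps : R) j z : (1 <= size z)%N ->
  L eps j (rcons z false) + L eps j (rcons z true) = 2 * L eps j.+1 z.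
Proof.
case: z => [|b w] // _.
rewrite /L !K_rcons !size_rcons /= exprS.
case: b => /=; rewrite ?natrD ?natrM /= [2 ^+ j.+1]exprS; field => //.
Qed.

Lemma bdry_L (R : realType) (eps : R) z : (1 <= size z)%N ->
  bdry eps (size z) z = L eps 0 z.
Proof.
case: z => [|b w] // _.
rewrite /bdry /L /= sum_V expr0 mulr1.
case: b => /=.
  rewrite [foldl _ 1%N _]foldl_G muln1 natrD natrX; field => //.
have := foldl_comp 0 0 w; rewrite !addn0 muln1 => H.
have -> : (foldl (G (fun c => c == false)) 0 w)%:R =
  (2 ^ size w)%:R - (foldl (G (fun c => c == true)) 0 w)%:R - 1 :> R.
  by rewrite -H !natrD; ring.
rewrite natrX; field => //.
Qed.


Lemma take_par (z : seq bool) a : take (size (rcons z a)).-1 (rcons z a) = z.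
Proof. by rewrite size_rcons /= -cats1 take_size_cat. Qed.

Lemma formula (R : realType) (eps : R) M h : dirichlet_sol M (bdry eps M) h ->
  forall j z, (size z + j)%N = M -> (1 <= size z)%N ->
  (2 ^+ j.+1 - 1) * h z = (2 ^+ j - 1) * h (take (size z).-1 z) + 2 ^+ j * L eps j z.
Proof.
case=> _ Hb Hh j; elim: j => [|j IH] z Hs H1.
  rewrite addn0 in Hs.
  rewrite Hb // -Hs bdry_L //; ring.
have Hlt : (size z < M)%N by lia.
have H0 := IH (rcons z false); have H1' := IH (rcons z true).
rewrite take_par size_rcons in H0. rewrite take_par size_rcons in H1'.
have e1 : ((size z).+1 + j = M)%N by lia.
have e2 : (1 <= (size z).+1)%N by [].
have {}H0 := H0 e1 e2.
have {}H1' := H1' e1 e2.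
have HL := L_add eps j H1.
have HH := Hh z H1 Hlt.
rewrite [2 ^+ j.+2]exprS [2 ^+ j.+1]exprS.
rewrite [2 ^+ j.+1]exprS in H0. rewrite [2 ^+ j.+1]exprS in H1'.
set b := 2 ^+ j in H0 H1' HL *.
set hp := h (take _ z) in HH *.
apply/eqP; rewrite -subr_eq0; apply/eqP.
have E : (2 * (2 * b) - 1) * h z - ((2 * b - 1) * hp + 2 * b * L eps j.+1 z)
  = ((2 * b - 1) * h (rcons z false) - ((b - 1) * h z + b * L eps j (rcons z false)))
  + ((2 * b - 1) * h (rcons z true) - ((b - 1) * h z + b * L eps j (rcons z true)))
  - (2 * b - 1) * (h (rcons z false) + h (rcons z true) + hp - 3 * h z)
  + b * (L eps j (rcons z false) + L eps j (rcons z true) - 2 * L eps j.+1 z).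
  ring.
by rewrite E H0 H1' HH HL !subrr !mulr0 subr0 !addr0.
Qed.


Lemma sep (R : realType) (eps : R) M h : 0 < eps -> dirichlet_sol M (bdry eps M) h ->
  forall n, (1 <= n)%N -> (n <= M)%N -> forall z y, size z = n -> size y = n ->
  (K z < K y)%N -> h z + eps <= h y.
Proof.
move=> he Hd; elim=> [|n IH] // _ HnM z y.
case/lastP: z => [|z a] //; case/lastP: y => [|y b] //.
rewrite !size_rcons => -[Hz] [Hy] HK.
have Hp : h z <= h y.
  have Kp := K_par (etrans Hz (esym Hy)) HK.
  have [E|NE] := eqVneq z y; first by rewrite E.
  have Kne : K z <> K y by move=> EK; move/eqP: NE; apply; apply: K_inj => //; rewrite Hz Hy.
  case: n IH Hz Hy HnM => [|n] IH Hz Hy HnM.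
    by move: NE; clear -Hz Hy; case: z Hz => //; case: y Hy.
  have l1 : (n.+1 <= M)%N by lia.
  have l2 : (K z < K y)%N by lia.
  have := IH erefl l1 z y Hz Hy l2; lra.
have Fz := formula Hd (j := (M - n.+1)%N) (z := rcons z a).
have Fy := formula Hd (j := (M - n.+1)%N) (z := rcons y b).
rewrite take_par !size_rcons Hz in Fz; rewrite take_par !size_rcons Hy in Fy.
have e1 : (n.+1 + (M - n.+1))%N = M by lia.
have {}Fz := Fz e1 erefl; have {}Fy := Fy e1 erefl.
move: Fz Fy; rewrite exprS /L !size_rcons Hz Hy /=.
set c := 2 ^+ (M - n.+1) => Fz Fy.
have a1 : 1 <= c by rewrite /c exprn_ege1 // ler1n.
have Kd : 1 <= (K (rcons y b))%:R - (K (rcons z a))%:R :> R.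
  by rewrite lerBrDr addrC natr1 ler_nat.
have D : (2 * c - 1) * (h (rcons y b) - h (rcons z a)) =
  (c - 1) * (h y - h z) + (c * c * eps) * ((K (rcons y b))%:R - (K (rcons z a))%:R).
  by rewrite mulrBr Fy Fz; ring.
have p1 : 0 <= (c - 1) * (h y - h z) by apply: mulr_ge0; lra.
have p2 : c * c * eps <= (c * c * eps) * ((K (rcons y b))%:R - (K (rcons z a))%:R).
  have c0 : 0 <= c by lra.
  have cce : 0 <= c * c * eps by rewrite !mulr_ge0 // ltW.
  by rewrite ler_peMr.
have p3 : (2 * c - 1) * eps <= c * c * eps.
  have c0 : 0 <= c - 1 by lra.
  have : 0 <= (c - 1) * (c - 1) * eps by rewrite !mulr_ge0 // ltW.
  move=> H; have -> : c * c * eps = (2 * c - 1) * eps + (c - 1) * (c - 1) * eps by ring.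
  lra.
have : (2 * c - 1) * eps <= (2 * c - 1) * (h (rcons y b) - h (rcons z a)) by lra.
rewrite ler_pM2l; last by lra.
lra.
Qed.

Theorem lemma2p4 (R : realType) (eps : R) (M : nat) (h : seq bool -> R) :
  0 < eps -> (1 <= M)%N ->
  dirichlet_sol M (bdry eps M) h ->
  forall (n : nat) (z y : seq bool),
    (n <= M)%N -> size z = n -> size y = n -> z != y ->
    eps <= `|h z - h y|.
Proof.
move=> he HM Hd n z y HnM Hz Hy Hne.
case: n HnM Hz Hy => [|n] HnM Hz Hy.
  by move: Hne; case: z Hz => //; case: y Hy.
have Kne : K z <> K y by move=> EK; move/eqP: Hne; apply; apply: K_inj => //; rewrite Hz Hy.
have [lt|gt|eq] := ltngtP (K z) (K y); last by [].
  have := sep he Hd (ltn0Sn n) HnM Hz Hy lt.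
  rewrite ler_normr; move=> H; apply/orP; right; lra.
have := sep he Hd (ltn0Sn n) HnM Hy Hz gt.
rewrite ler_normr; move=> H; apply/orP; left; lra.
Qed.
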